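(* Let $G$ be a finite simple graph and $k\ge 1$ an integer. If $Z_k(G)=k$, then $Z_{k-1}(G)=k$.
   Context: Filling rule: if a filled vertex has exactly one unfilled neighbor (and any number of filled neighbors), that neighbor becomes filled; ''applying the filling rule in a subgraph $H$'' means applying it with neighborhoods taken in $H$. The $Z_q$-Game on $G$ ($q\ge 0$ an integer): initially all vertices are unfilled; a player repeatedly performs one of the following operations until all vertices are filled: (1) for one token, change any vertex from unfilled to filled; (2) at no cost, apply the filling rule in $G$; (3) if $F$ is the current set of filled vertices and $U_1,\dots,U_k$ are the vertex sets of the connected components of $G[V(G)\setminus F]$ with $k\ge q+1$, the player announces a selection of at least $q+1$ of the $U_i$ to an oracle (an adversary), the oracle returns a nonempty subset $\{U_{i_1},\dots,U_{i_\ell}\}$ of the selected components, and the player may at no cost apply the filling rule in $G[F\cup U_{i_1}\cup\cdots\cup U_{i_\ell}]$. $Z_q(G)$ is the minimum number of tokens with which the player can guarantee that all vertices become filled, regardless of the oracle's responses. *)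

(* Defs.v *)
From HB Require Import structures.
From mathcomp Require Import all_boot.
Set Implicit Arguments. Unset Strict Implicit. Unset Printing Implicit Defensive.

(* A finite simple graph: vertex type V (a finType), adjacency e : rel V,
   assumed symmetric and irreflexive in the theorem statement. *)

Section ZqGame.
Variables (V : finType) (e : rel V).

Definition force_in (W F F' : {set V}) : Prop :=
  exists u w, [/\ u \in F, u \in W, w \in W, w \notin F & e u w] /\
    (forall x, x \in W -> e u x -> x \notin F -> x = w) /\ F' = w |: F.

Inductive forces_in (W : {set V}) : {set V} -> {set V} -> Prop :=
| forces_refl (F : {set V}) : forces_in W F F
| forces_step (F F' F'' : {set V}) : force_in W F F' -> forces_in W F' F'' -> forces_in W F F''.

Definition unfilled_rel (F : {set V}) : rel V :=
  [rel x y | [&& e x y, x \notin F & y \notin F]].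

Definition comp (F : {set V}) (x : V) : {set V} :=
  [set y | connect (unfilled_rel F) x y].

Definition is_comp (F : {set V}) (U : {set V}) : Prop :=
  exists2 x, x \notin F & U = comp F x.

(* win q F t : starting from filled set F with t tokens available, the player
   can guarantee that all vertices become filled in the Z_q-game,
   whatever the oracle answers. *)
Inductive win (q : nat) : {set V} -> nat -> Prop :=
| win_done (F : {set V}) (t : nat) : F = setT -> win q F t
| win_token (F : {set V}) (t : nat) (v : V) : v \notin F -> win q (v |: F) t -> win q F t.+1
| win_force (F F' : {set V}) (t : nat) : force_in setT F F' -> win q F' t -> win q F t
| win_oracle (F : {set V}) (t : nat) (S : {set {set V}}) :
    (forall U, U \in S -> is_comp F U) ->
    q.+1 <= #|S| ->
    (forall Tr : {set {set V}}, Tr \subset S -> Tr != set0 ->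
       exists2 F', forces_in (F :|: \bigcup_(U in Tr) U) F F' & win q F' t) ->
    win q F t.

Definition Zq_is (q n : nat) : Prop :=
  win q set0 n /\ forall m, win q set0 m -> n <= m.

End ZqGame.

(* Main.v *)
Require Import Defs.
From HB Require Import structures.
From mathcomp Require Import all_boot.
From Stdlib Require Import Classical.

Set Implicit Arguments. Unset Strict Implicit. Unset Printing Implicit Defensive.

Section Proofs.
Variables (V : finType) (e : rel V).

Definition actv (F : {set V}) : {set V} :=
  [set u | (u \in F) && [exists x, e u x && (x \notin F)]].

Lemma win_mono q : forall F t, win e q F t -> forall q', q' <= q -> win e q' F t.
Proof.
fix IH 3.
move=> F t w q' hq; case: w.
- by move=> F0 t0 h; apply: win_done.
- move=> F0 t0 v hv w; apply: win_token hv _; exact: (IH _ _ w q' hq).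
- move=> F0 F1 t0 hf w; apply: win_force hf _; exact: (IH _ _ w q' hq).
- move=> F0 t0 S hS hc H; apply: (win_oracle (S := S)) => //.
    exact: leq_trans hc.
  move=> Tr h1 h2; case: (H Tr h1 h2) => F' hf hw.
  exists F' => //; exact: (IH _ _ hw q' hq).
Qed.

Definition good (F : {set V}) (Tr : {set {set V}}) :=
  forall u w, u \in F -> w \in \bigcup_(D in Tr) D -> w \notin F -> e u w ->
    exists x, [/\ x \in \bigcup_(D in Tr) D, x \notin F, e u x & x != w].

Lemma greedy (F : {set V}) n : forall (A : {set V}) (Tr : {set {set V}}),
  #|A| = n -> #|A| < #|Tr| ->
  (forall D1 D2 x, D1 \in Tr -> D2 \in Tr -> x \in D1 -> x \in D2 -> D1 = D2) ->
  (forall u x, u \in F -> x \in \bigcup_(D in Tr) D -> e u x -> x \notin F -> u \in A) ->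
  exists2 Tr' : {set {set V}}, Tr' \subset Tr & (Tr' != set0) /\ good F Tr'.
Proof.
elim: n => [|n IHn] A Tr hA hlt hdis hinv.
- case: (classic (good F Tr)) => hg.
    exists Tr => //; split => //; apply/eqP => h0; move: hlt; by rewrite h0 cards0.
  exfalso; apply: hg => u w uF wT wF euw.
  have := hinv u w uF wT euw wF; by rewrite (cards0_eq hA) inE.
- case: (classic (good F Tr)) => hg.
    exists Tr => //; split => //; apply/eqP => h0; move: hlt; by rewrite h0 cards0.
  have [u [w [uF wT wF euw huniq]]] : exists u w, [/\ u \in F, w \in \bigcup_(D in Tr) D,
      w \notin F, e u w & forall x, x \in \bigcup_(D in Tr) D -> x \notin F -> e u x -> x = w].
    apply: NNPP => hne; apply: hg => u w uF wT wF euw.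
    apply: NNPP => hnx; apply: hne; exists u, w; split => // x xT xF eux.
    apply: NNPP => hxw; apply: hnx; exists x; split => //; exact/eqP.
  have uA : u \in A := hinv u w uF wT euw wF.
  case/bigcupP: wT => D DT wD.
  have hA1 : #|A :\ u| = n by move: hA; rewrite (cardsD1 u A) uA add1n => -[].
  have hTr1 : #|Tr| = (#|Tr :\ D|).+1 by rewrite (cardsD1 D Tr) DT.
  have p1 : #|A :\ u| < #|Tr :\ D| by move: hlt; rewrite hTr1 hA hA1 ltnS.
  have p2 : forall D1 D2 x, D1 \in Tr :\ D -> D2 \in Tr :\ D -> x \in D1 -> x \in D2 -> D1 = D2.
    move=> D1 D2 x; rewrite !inE => /andP[_ h1] /andP[_ h2]; exact: hdis.
  have p3 : forall u' x, u' \in F -> x \in \bigcup_(D0 in Tr :\ D) D0 -> e u' x -> x \notin F -> u' \in A :\ u.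
    move=> u' x u'F /bigcupP[D1 D1T xD1] eux xF.
    move: D1T; rewrite inE => /andP[D1D D1T].
    have xT : x \in \bigcup_(D0 in Tr) D0 by apply/bigcupP; exists D1.
    rewrite !inE (hinv u' x u'F xT eux xF) andbT.
    apply/eqP => eu; subst u'.
    have exw := huniq x xT xF eux; subst x.
    by rewrite (hdis D1 D w D1T DT xD1 wD) in_set1 eqxx in D1D.
  have [Tr' h1 h2] := IHn (A :\ u) (Tr :\ D) hA1 p1 p2 p3.
  exists Tr' => //; apply: subset_trans h1 _; exact: subsetDl.
Qed.

Lemma forces_none (W F F' : {set V}) : forces_in e W F F' -> (forall F1, ~ force_in e W F F1) -> F' = F.
Proof. by case => // F0 F1 F2 h _ /(_ F1 h). Qed.

Hypothesis e_sym : symmetric e.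

Lemma comp_disj F U1 U2 x : is_comp e F U1 -> is_comp e F U2 -> x \in U1 -> x \in U2 -> U1 = U2.
Proof.
have hs : connect_sym (unfilled_rel e F).
  apply: sym_connect_sym => a b; rewrite /unfilled_rel /= e_sym.
  by case: (a \in F); case: (b \in F); rewrite ?andbF.
case=> x1 _ -> [x2 _ ->]; rewrite !inE => h1 h2.
apply/setP => y; rewrite !inE.
apply/idP/idP => h.
- apply: connect_trans h2 _; rewrite hs in h1; exact: connect_trans h1 h.
- apply: connect_trans h1 _; rewrite hs in h2; exact: connect_trans h2 h.
Qed.

Lemma actv_token F v : #|actv (v |: F)| <= (#|actv F|).+1.
Proof.
apply: leq_trans (_ : #|v |: actv F| <= _); last by rewrite cardsU1; case: (v \in actv F).
apply: subset_leq_card; apply/subsetP => u; rewrite !inE => /andP[/orP[->//|uF] /existsP[x]].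
rewrite !inE negb_or => /andP[eux /andP[_ xF]].
by rewrite uF /=; apply/orP; right; apply/existsP; exists x; rewrite eux.
Qed.

Lemma actv_force F F' : force_in e setT F F' -> #|actv F'| <= #|actv F|.
Proof.
case=> u [w [[uF _ _ wF euw] [huniq ->]]].
have uA : u \in actv F by rewrite inE uF; apply/existsP; exists w; rewrite euw.
rewrite (cardsD1 u (actv F)) uA add1n.
apply: leq_trans (_ : #|w |: (actv F :\ u)| <= _); last first.
  by rewrite cardsU1; case: (w \in _).
apply: subset_leq_card; apply/subsetP => y; rewrite !inE => /andP[/orP[->//|yF] /existsP[x]].
rewrite !inE negb_or => /andP[exy /andP[xw xF]].
apply/orP; right; rewrite yF /=; apply/andP; split.
  apply/eqP => yu; subst y; move/eqP: xw; apply; exact: huniq.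
by apply/existsP; exists x; rewrite exy.
Qed.

Lemma winB q q' : forall F t, win e q F t -> t + #|actv F| <= q -> win e q' F t.
Proof.
fix IH 3.
move=> F t w ht; case: w ht.
- by move=> F0 t0 h _; apply: win_done.
- move=> F0 t0 v hv w ht; apply: win_token hv _; apply: (IH _ _ w).
  apply: leq_trans ht; rewrite addSn -addnS leq_add2l; exact: actv_token.
- move=> F0 F1 t0 hf w ht; have hb := actv_force hf; apply: win_force hf _; apply: (IH _ _ w).
  apply: leq_trans ht; rewrite leq_add2l; exact: hb.
- move=> F0 t0 S hS hc H ht.
  have hlt : #|actv F0| < #|S|.
    apply: leq_trans hc; rewrite ltnS; apply: leq_trans ht; exact: leq_addl.
  have hdis : forall D1 D2 x, D1 \in S -> D2 \in S -> x \in D1 -> x \in D2 -> D1 = D2.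
    move=> D1 D2 x h1 h2; exact: comp_disj (hS _ h1) (hS _ h2).
  have hinv : forall u x, u \in F0 -> x \in \bigcup_(D in S) D -> e u x -> x \notin F0 -> u \in actv F0.
    move=> u x uF _ eux xF; rewrite inE uF /=; apply/existsP; exists x; by rewrite eux.
  have [Tr' hsub [hne hg]] := greedy (erefl _) hlt hdis hinv.
  case: (H Tr' hsub hne) => F' hf hw.
  have eF : F' = F0.
    apply: (forces_none hf); move=> F1 [u [w [[uF _ wW wF euw] [huniq _]]]].
    have wT : w \in \bigcup_(D in Tr') D by move: wW; rewrite inE (negbTE wF).
    have [x [xT xF eux xw]] := hg u w uF wT wF euw.
    move/eqP: xw; apply; apply: huniq => //; by rewrite inE xT orbT.
  subst F'; exact: (IH _ _ hw ht).
Qed.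

End Proofs.

Theorem corollary2p3 (V : finType) (e : rel V)
  (e_sym : symmetric e) (e_irr : irreflexive e) (k : nat) (hk : 1 <= k) :
  Zq_is e k k -> Zq_is e k.-1 k.
Proof.
case=> hw hmin; split.
  exact: (win_mono hw (leq_pred k)).
move=> m hm; rewrite leqNgt; apply/negP => hlt.
have : win e k set0 m.
  apply: (winB e_sym k hm); rewrite addnC.
  have -> : #|actv e set0| = 0.
    apply/eqP; rewrite cards_eq0; apply/eqP/setP => u; by rewrite !inE.
  by rewrite add0n -ltnS prednK.
move/hmin; by rewrite leqNgt hlt.
Qed.
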